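(* For every set of formulas $\Gamma$ and every formula $\phi$: if $\Gamma\vdash\phi$ then $\Gamma\vDash\phi$. That is, the logic $\vdash$ is sound with respect to the class of continuous t-norms.
   Context: Fix a countable predicate language $\mathcal L$ consisting of variables, constant symbols and predicate symbols (so terms are just variables and constants), with connectives $\to$, $\&$, the propositional constant $0$ and quantifiers $\forall,\exists$. Abbreviations: $\phi\wedge\psi$ is $\phi\&(\phi\to\psi)$; $\phi\vee\psi$ is $((\phi\to\psi)\to\psi)\wedge((\psi\to\phi)\to\phi)$; $\neg\phi$ is $\phi\to 0$; $1$ is $0\to 0$; $\beta^n$ is $\beta\&\cdots\&\beta$ ($n$ factors). $\phi(x/t)$ denotes the result of substituting the term $t$ for the free occurrences of $x$ in $\phi$. A sentence is a formula with no free variables; a theory is any set of formulas. Hájek's basic predicate logic BL$\forall$ has the axiom schemata (A1) $(\phi\to\psi)\to((\psi\to\chi)\to(\phi\to\chi))$; (A2) $(\phi\&\psi)\to\phi$; (A3) $(\phi\&\psi)\to(\psi\&\phi)$; (A4) $(\phi\&(\phi\to\psi))\to(\psi\&(\psi\to\phi))$; (A5) $(\phi\to(\psi\to\chi))\to((\phi\&\psi)\to\chi)$; (A6) $((\phi\&\psi)\to\chi)\to(\phi\to(\psi\to\chi))$; (A7) $((\phi\to\psi)\to\chi)\to(((\psi\to\phi)\to\chi)\to\chi)$; (A8) $0\to\phi$; ($\forall$1) $\forall x\phi\to\phi(x/t)$ and ($\exists$1) $\phi(x/t)\to\exists x\phi$, for $t$ substitutable for $x$ in $\phi$; ($\forall$2)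 $\forall x(\phi\to\psi)\to(\phi\to\forall x\psi)$, ($\exists$2) $\forall x(\psi\to\phi)\to(\exists x\psi\to\phi)$ and (Lin) $\forall x(\psi\vee\phi)\to((\forall x\psi)\vee\phi)$, each with $x$ not free in $\phi$; its rules are modus ponens (from $\phi$ and $\phi\to\psi$ infer $\psi$) and generalization (from $\phi$ infer $\forall x\phi$). The logic $\vdash$ extends BL$\forall$ by the axiom schema (RC) $\forall x(\chi\&\chi)\to((\forall x\chi)\&(\forall x\chi))$ for every formula $\chi$, and the infinitary rule (Inf): from all of $\phi\vee(\alpha\to\beta^n)$, $n\in\mathbb N$, infer $\phi\vee(\alpha\to(\alpha\&\beta))$, where $\phi,\alpha,\beta$ are sentences. A proof from $\Gamma$ is a sequence $(\phi_i)_{i\le\xi}$ indexed by the ordinals up to some ordinal $\xi$ such that each $\phi_i$ is an axiom of BL$\forall$, an instance of (RC), a member of $\Gamma$, or is obtained from formulas in $\{\phi_j: j<i\}$ by modus ponens, generalization, or (Inf). $\Gamma\vdash\phi$ means there is a proof from $\Gamma$ whose last member is $\phi$. Semantics: a continuous t-norm is a continuous binary operation $\cdot$ on $[0,1]$ that is commutative, associative, monotone in each argument and has $1$ as unit; it is regarded as the algebra $([0,1],\cdot,\to,\min,\max,0,1)$ where $\to$ is its residuum ($x\cdot y\le z$ iff $x\le y\to z$). For such a $\mathbf B$, a $\mathbf B$-structure $\mathbf M$ consists of a nonempty set $M$, an element $c^{\mathbf M}\in M$ for each constant $c$, and a function $P^{\mathbf M}:M^n\to[0,1]$ for each $n$-ary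 predicate $P$. For a valuation $v$ (a map from variables to $M$), $\|\phi\|^{\mathbf M,v}$ is defined inductively: $\|P(t_1,\dots,t_n)\|^{\mathbf M,v}=P^{\mathbf M}(t_1^{\mathbf M,v},\dots,t_n^{\mathbf M,v})$ (with $c^{\mathbf M,v}=c^{\mathbf M}$, $x^{\mathbf M,v}=v(x)$), $\|0\|=0$, $\&$ and $\to$ are interpreted by $\cdot$ and its residuum, $\|\forall x\psi\|^{\mathbf M,v}=\inf\{\|\psi\|^{\mathbf M,w}:w\equiv_x v\}$ and $\|\exists x\psi\|^{\mathbf M,v}=\sup\{\|\psi\|^{\mathbf M,w}:w\equiv_x v\}$, where $w\equiv_x v$ means $w$ agrees with $v$ except possibly at $x$. $\mathbf M$ is a model of $\phi$ if $\|\phi\|^{\mathbf M,v}=1$ for every valuation $v$, and a model of a set $\Gamma$ if it is a model of each member. $\Gamma\vDash\phi$ means: for every continuous t-norm $\mathbf B$ and every $\mathbf B$-structure $\mathbf M$, if $\mathbf M$ is a model of $\Gamma$ then $\mathbf M$ is a model of $\phi$. *)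

(* Defs.v *)
From Stdlib Require Import Reals List.
From Stdlib Require Vector.
From Coquelicot Require Import Coquelicot.
Open Scope R_scope.

Record language := {
  Const : Type;
  Pred : Type;
  arity : Pred -> nat;
  Const_countable : exists f : Const -> nat, forall a b, f a = f b -> a = b;
  Pred_countable : exists f : Pred -> nat, forall a b, f a = f b -> a = b
}.

Section Syntax.
Variable L : language.

Inductive term : Type :=
| Var : nat -> term
| Cst : Const L -> term.

Inductive form : Type :=
| Atom : forall p : Pred L, Vector.t term (arity L p) -> form
| Imp : form -> form -> form
| Conj : form -> form -> form          (* strong conjunction & *)
| Zero : form
| All : nat -> form -> form
| Ex : nat -> form -> form.

Definition Wedge (f g : form) : form := Conj f (Imp f g).
Definition Vee (f g : form) : form :=
  Wedge (Imp (Imp f g) g) (Imp (Imp g f) f).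
Definition Neg (f : form) : form := Imp f Zero.
Definition One : form := Imp Zero Zero.
(* bpow b n = b & ... & b with n+1 factors, i.e. b^(n+1) *)
Fixpoint bpow (b : form) (n : nat) : form :=
  match n with
  | O => b
  | S k => Conj b (bpow b k)
  end.

Definition term_has_var (x : nat) (t : term) : bool :=
  match t with Var y => Nat.eqb x y | Cst _ => false end.

Fixpoint free (x : nat) (f : form) : bool :=
  match f with
  | Atom p ts => Vector.fold_right (fun t b => orb (term_has_var x t) b) ts false
  | Imp g h | Conj g h => orb (free x g) (free x h)
  | Zero => false
  | All y g | Ex y g => if Nat.eqb x y then false else free x g
  end.

Definition sentence (f : form) : Prop := forall x, free x f = false.

Definition tsubst (x : nat) (t : term) (s : term) : term :=
  match s with
  | Var y => if Nat.eqb x y then t else Var y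
  | Cst c => Cst c
  end.

(* f(x/t): replace the free occurrences of x in f by t (no renaming) *)
Fixpoint subst (x : nat) (t : term) (f : form) : form :=
  match f with
  | Atom p ts => Atom p (Vector.map (tsubst x t) ts)
  | Imp g h => Imp (subst x t g) (subst x t h)
  | Conj g h => Conj (subst x t g) (subst x t h)
  | Zero => Zero
  | All y g => if Nat.eqb x y then All y g else All y (subst x t g)
  | Ex y g => if Nat.eqb x y then Ex y g else Ex y (subst x t g)
  end.

Fixpoint substitutable (t : term) (x : nat) (f : form) : Prop :=
  match f with
  | Atom _ _ | Zero => True
  | Imp g h | Conj g h => substitutable t x g /\ substitutable t x h
  | All y g | Ex y g =>
      free x f = false \/ (term_has_var y t = false /\ substitutable t x g)
  end.

Inductive BLaxiom : form -> Prop :=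
| A1 f g h : BLaxiom (Imp (Imp f g) (Imp (Imp g h) (Imp f h)))
| A2 f g : BLaxiom (Imp (Conj f g) f)
| A3 f g : BLaxiom (Imp (Conj f g) (Conj g f))
| A4 f g : BLaxiom (Imp (Conj f (Imp f g)) (Conj g (Imp g f)))
| A5 f g h : BLaxiom (Imp (Imp f (Imp g h)) (Imp (Conj f g) h))
| A6 f g h : BLaxiom (Imp (Imp (Conj f g) h) (Imp f (Imp g h)))
| A7 f g h : BLaxiom (Imp (Imp (Imp f g) h) (Imp (Imp (Imp g f) h) h))
| A8 f : BLaxiom (Imp Zero f)
| All1 x f t : substitutable t x f -> BLaxiom (Imp (All x f) (subst x t f))
| Ex1 x f t : substitutable t x f -> BLaxiom (Imp (subst x t f) (Ex x f))
| All2 x f g : free x f = false ->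
    BLaxiom (Imp (All x (Imp f g)) (Imp f (All x g)))
| Ex2 x f g : free x f = false ->
    BLaxiom (Imp (All x (Imp g f)) (Imp (Ex x g) f))
| Lin x f g : free x f = false ->
    BLaxiom (Imp (All x (Vee g f)) (Vee (All x g) f)).

Inductive RCaxiom : form -> Prop :=
| RC x c : RCaxiom (Imp (All x (Conj c c)) (Conj (All x c) (All x c))).

(* A proof from Gamma: a sequence indexed by the ordinals up to some xi,
   rendered as a well-ordered index type I with a greatest element. *)
Record proof_from (Gamma : form -> Prop) (phi : form) := {
  pidx : Type;
  plt : pidx -> pidx -> Prop;
  plt_irrefl : forall i, ~ plt i i;
  plt_trans : forall i j k, plt i j -> plt j k -> plt i k;
  plt_total : forall i j, plt i j \/ i = j \/ plt j i;
  plt_wf : well_founded plt;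
  plast : pidx;
  plast_max : forall i, i = plast \/ plt i plast;
  pform : pidx -> form;
  pform_last : pform plast = phi;
  pjust : forall i,
    BLaxiom (pform i) \/ RCaxiom (pform i) \/ Gamma (pform i) \/
    (exists j k, plt j i /\ plt k i /\ pform k = Imp (pform j) (pform i)) \/
    (exists j x, plt j i /\ pform i = All x (pform j)) \/
    (exists f a b, sentence f /\ sentence a /\ sentence b /\
       pform i = Vee f (Imp a (Conj a b)) /\
       forall n, exists j, plt j i /\ pform j = Vee f (Imp a (bpow b n)))
}.

Definition provable (Gamma : form -> Prop) (phi : form) : Prop :=
  exists p : proof_from Gamma phi, True.

End Syntax.

Definition in01 (x : R) : Prop := 0 <= x <= 1.

Record ctnorm := {
  tn : R -> R -> R;
  res : R -> R -> R;
  tn_in01 : forall x y, in01 x -> in01 y -> in01 (tn x y);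
  tn_comm : forall x y, in01 x -> in01 y -> tn x y = tn y x;
  tn_assoc : forall x y z, in01 x -> in01 y -> in01 z ->
      tn x (tn y z) = tn (tn x y) z;
  tn_mono : forall x y z, in01 x -> in01 y -> in01 z ->
      x <= y -> tn x z <= tn y z;
  tn_mono_r : forall x y z, in01 x -> in01 y -> in01 z ->
      x <= y -> tn z x <= tn z y;
  tn_unit : forall x, in01 x -> tn x 1 = x;
  tn_cont : forall x y, in01 x -> in01 y -> forall eps, 0 < eps ->
      exists delta, 0 < delta /\ forall x' y', in01 x' -> in01 y' ->
        Rabs (x - x') < delta -> Rabs (y - y') < delta ->
        Rabs (tn x y - tn x' y') < eps;
  res_in01 : forall x y, in01 x -> in01 y -> in01 (res x y);
  residuation : forall x y z, in01 x -> in01 y -> in01 z ->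
      (tn x y <= z <-> x <= res y z)
}.

Record structure (L : language) := {
  dom : Type;
  dom_nonempty : inhabited dom;
  cint : Const L -> dom;
  pint : forall p : Pred L, Vector.t dom (arity L p) -> R;
  pint_in01 : forall p args, in01 (pint p args)
}.

Section Semantics.
Variables (L : language) (B : ctnorm) (M : structure L).

Definition upd (v : nat -> dom L M) (x : nat) (m : dom L M) : nat -> dom L M :=
  fun y => if Nat.eqb y x then m else v y.

Definition teval (v : nat -> dom L M) (t : term L) : dom L M :=
  match t with Var y => v y | Cst c => cint L M c end.

Fixpoint eval (f : form L) (v : nat -> dom L M) : R :=
  match f with
  | Atom p ts => pint L M p (Vector.map (teval v) ts)
  | Imp g h => res B (eval g v) (eval h v)
  | Conj g h => tn B (eval g v) (eval h v)
  | Zero => 0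
  | All x g => real (Glb_Rbar (fun r => exists m, r = eval g (upd v x m)))
  | Ex x g => real (Lub_Rbar (fun r => exists m, r = eval g (upd v x m)))
  end.

Definition is_model (f : form L) : Prop := forall v, eval f v = 1.

End Semantics.

Definition entails (L : language) (Gamma : form L -> Prop) (phi : form L) : Prop :=
  forall (B : ctnorm) (M : structure L),
    (forall psi, Gamma psi -> is_model L B M psi) -> is_model L B M phi.

(* Main.v *)
Require Import Defs.
From Stdlib Require Import Reals Lra Classical FunctionalExtensionality.
From Coquelicot Require Import Coquelicot.
Open Scope R_scope.

Section Alg.
Variable B : ctnorm.
Local Notation t := (tn B).
Local Notation r := (res B).

Lemma i0 : in01 0. Proof. unfold in01; lra. Qed.
Lemma i1 : in01 1. Proof. unfold in01; lra. Qed.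
Hint Resolve i0 i1 tn_in01 res_in01 : i01.
Ltac I := eauto with i01.

Lemma tcomm x y : in01 x -> in01 y -> t x y = t y x. Proof. apply tn_comm. Qed.
Lemma t1l x : in01 x -> t 1 x = x.
Proof. intros; rewrite tcomm by I; apply tn_unit; auto. Qed.
Lemma tlel x y : in01 x -> in01 y -> t x y <= x.
Proof. intros. rewrite <- (tn_unit B x) at 2 by auto. apply tn_mono_r; I. apply H0. Qed.
Lemma tler x y : in01 x -> in01 y -> t x y <= y.
Proof. intros. rewrite tcomm by I. apply tlel; auto. Qed.
Lemma rle1 x y : in01 x -> in01 y -> r x y <= 1.
Proof. intros. apply (res_in01 B x y H H0). Qed.
Lemma r1 x y : in01 x -> in01 y -> x <= y -> r x y = 1.
Proof. intros. apply Rle_antisym. apply rle1; auto.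
  apply residuation; I. rewrite t1l; auto. Qed.
Lemma req1 x y : in01 x -> in01 y -> r x y = 1 -> x <= y.
Proof. intros. rewrite <- (t1l x) by auto. apply residuation; I. lra. Qed.
Lemma res_iff x y z : in01 x -> in01 y -> in01 z -> (x <= r y z <-> t x y <= z).
Proof. intros. split; apply residuation; auto. Qed.
Lemma r1l y : in01 y -> r 1 y = y.
Proof. intros. apply Rle_antisym.
  - rewrite <- (tn_unit B (r 1 y)) by I. apply residuation; I. lra.
  - apply residuation; I. rewrite tn_unit; auto; lra. Qed.
Lemma mp x y : in01 x -> in01 y -> t x (r x y) <= y.
Proof. intros. rewrite tcomm by I. apply residuation; I. lra. Qed.
Lemma rge x y : in01 x -> in01 y -> y <= r x y.
Proof. intros. apply residuation; I. apply tlel; auto. Qed.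
Lemma tmono a b c d : in01 a -> in01 b -> in01 c -> in01 d -> a <= b -> c <= d -> t a c <= t b d.
Proof. intros. apply Rle_trans with (t b c). apply tn_mono; auto. apply tn_mono_r; auto. Qed.
Lemma tzero y : in01 y -> t y 0 = 0.
Proof. intros. apply Rle_antisym. apply tler; I. apply (tn_in01 B y 0 H i0). Qed.

Definition clamp z := Rmax 0 (Rmin 1 z).
Lemma clamp01 z : in01 (clamp z).
Proof. unfold clamp, in01, Rmax, Rmin. repeat destruct Rle_dec; lra. Qed.
Lemma clamp_id z : in01 z -> clamp z = z.
Proof. unfold clamp, in01, Rmax, Rmin. intros. repeat destruct Rle_dec; lra. Qed.
Lemma clamp_lip z z' : Rabs (clamp z - clamp z') <= Rabs (z - z').
Proof. unfold clamp, Rmax, Rmin. repeat destruct Rle_dec; unfold Rabs; repeat destruct Rcase_abs; lra. Qed.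

Lemma divis x y : in01 x -> in01 y -> x <= y -> exists z, in01 z /\ t y z = x.
Proof.
  intros Hx Hy Hxy.
  set (f := fun z => t y (clamp z)).
  assert (Hc : continuity f).
  { intros z0. unfold continuity_pt, continue_in, limit1_in, limit_in; simpl.
    unfold R_dist. intros eps Heps.
    destruct (tn_cont B y (clamp z0) Hy (clamp01 z0) eps Heps) as [d [Hd Hd']].
    exists d; split; auto. intros z [_ Hz]. unfold f.
    rewrite Rabs_minus_sym. apply Hd'; auto using clamp01.
    rewrite Rminus_diag, Rabs_R0; auto.
    eapply Rle_lt_trans. apply clamp_lip. rewrite Rabs_minus_sym; auto. }
  assert (f0 : f 0 = 0). { unfold f. rewrite clamp_id by I. apply tzero; auto. }
  assert (f1 : f 1 = y). { unfold f. rewrite clamp_id by I. apply tn_unit; auto. }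
  destruct (IVT_gen f 0 1 x Hc) as [z [Hz1 Hz2]].
  { rewrite f0, f1. unfold Rmin, Rmax, in01 in *. repeat destruct Rle_dec; lra. }
  exists (clamp z). split. apply clamp01. exact Hz2.
Qed.

Lemma tmin x y : in01 x -> in01 y -> t x (r x y) = Rmin x y.
Proof.
  intros. unfold Rmin. destruct Rle_dec.
  - rewrite r1 by auto. apply tn_unit; auto.
  - destruct (divis y x) as [z [Hz Hz']]; auto. lra.
    apply Rle_antisym. apply mp; auto.
    rewrite <- Hz' at 1. apply tn_mono_r; I. apply residuation; I.
    rewrite tcomm, Hz' by I; lra.
Qed.

Lemma vee x y : in01 x -> in01 y ->
  t (r (r x y) y) (r (r (r x y) y) (r (r y x) x)) = Rmax x y.
Proof.
  intros. rewrite tmin by I. unfold Rmax, Rmin.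
  destruct (Rle_dec x y).
  - rewrite (r1 x y) by auto. rewrite r1l by auto.
    destruct Rle_dec; auto. exfalso; apply n.
    apply residuation; I. rewrite tmin by auto. unfold Rmin; destruct Rle_dec; lra.
  - rewrite (r1 y x) by (auto; lra). rewrite r1l by auto.
    assert (x <= r (r x y) y). { apply residuation; I. rewrite tmin by auto.
      unfold Rmin; destruct Rle_dec; lra. }
    destruct Rle_dec; lra.
Qed.
End Alg.

Definition glbf {D} (h : D -> R) := real (Glb_Rbar (fun r => exists m, r = h m)).
Definition lubf {D} (h : D -> R) := real (Lub_Rbar (fun r => exists m, r = h m)).

Lemma glb_char {D} (h : D -> R) : inhabited D -> (forall d, in01 (h d)) ->
  in01 (glbf h) /\ (forall m, glbf h <= h m) /\ (forall b, (forall m, b <= h m) -> b <= glbf h).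
Proof.
  intros [d0] Hh. unfold glbf.
  destruct (Glb_Rbar_correct (fun r => exists m, r = h m)) as [Hlb Hg].
  destruct (Glb_Rbar (fun r => exists m, r = h m)) as [g| |] eqn:E.
  - simpl. assert (Hle : forall m, g <= h m) by (intro m; apply (Hlb (h m)); eauto).
    assert (Hge : forall b, (forall m, b <= h m) -> b <= g).
    { intros b Hb. apply (Hg (Finite b)). intros x [m ->]. apply Hb. }
    split; [|split; auto].
    split. apply Hge. intro m; apply (Hh m). specialize (Hle d0); specialize (Hh d0); unfold in01 in *; lra.
  - exfalso. specialize (Hlb (h d0) (ex_intro _ d0 eq_refl)). simpl in Hlb. auto.
  - exfalso. specialize (Hg (Finite 0)). simpl in Hg. apply Hg. intros x [m ->]. simpl. apply (Hh m).
Qed.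

Lemma lub_char {D} (h : D -> R) : inhabited D -> (forall d, in01 (h d)) ->
  in01 (lubf h) /\ (forall m, h m <= lubf h) /\ (forall b, (forall m, h m <= b) -> lubf h <= b).
Proof.
  intros [d0] Hh. unfold lubf.
  destruct (Lub_Rbar_correct (fun r => exists m, r = h m)) as [Hlb Hg].
  destruct (Lub_Rbar (fun r => exists m, r = h m)) as [g| |] eqn:E.
  - simpl. assert (Hle : forall m, h m <= g) by (intro m; apply (Hlb (h m)); eauto).
    assert (Hge : forall b, (forall m, h m <= b) -> g <= b).
    { intros b Hb. apply (Hg (Finite b)). intros x [m ->]. apply Hb. }
    split; [|split; auto].
    split. specialize (Hle d0); specialize (Hh d0); unfold in01 in *; lra. apply Hge. intro m; apply (Hh m).
  - exfalso. specialize (Hg (Finite 1)). simpl in Hg. apply Hg. intros x [m ->]. simpl. apply (Hh m).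
  - exfalso. specialize (Hlb (h d0) (ex_intro _ d0 eq_refl)). simpl in Hlb. auto.
Qed.

Section Sem.
Variables (L : language) (B : ctnorm) (M : structure L).
Local Notation eval := (eval L B M).

Lemma eval_All x g v : eval (All L x g) v = glbf (fun m => eval g (upd L M v x m)).
Proof. reflexivity. Qed.
Lemma eval_Ex x g v : eval (Ex L x g) v = lubf (fun m => eval g (upd L M v x m)).
Proof. reflexivity. Qed.

Lemma eval_in01 f : forall v, in01 (eval f v).
Proof.
  induction f; intro v; simpl.
  - apply pint_in01.
  - apply res_in01; auto.
  - apply tn_in01; auto.
  - apply i0.
  - apply (glb_char (fun m => eval f (upd L M v n m)) (dom_nonempty L M)); auto.
  - apply (lub_char (fun m => eval f (upd L M v n m)) (dom_nonempty L M)); auto.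
Qed.

Lemma map_ext_vars n (ts : Vector.t (term L) n) v w :
  (forall z, Vector.fold_right (fun t b => orb (term_has_var L z t) b) ts false = true -> v z = w z) ->
  Vector.map (teval L M v) ts = Vector.map (teval L M w) ts.
Proof.
  induction ts; intros H; simpl; auto.
  f_equal.
  - destruct h; simpl; auto. apply H. simpl. rewrite Nat.eqb_refl. reflexivity.
  - apply IHts. intros z Hz. apply H. simpl. rewrite Hz. apply Bool.orb_true_r.
Qed.

Lemma eval_ext f : forall v w, (forall z, free L z f = true -> v z = w z) -> eval f v = eval f w.
Proof.
  induction f; intros v w H; simpl.
  - f_equal. apply map_ext_vars. exact H.
  - simpl in H. rewrite (IHf1 v w), (IHf2 v w); auto; intros z Hz; apply H; rewrite Hz; auto using Bool.orb_true_r.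
  - simpl in H. rewrite (IHf1 v w), (IHf2 v w); auto; intros z Hz; apply H; rewrite Hz; auto using Bool.orb_true_r.
  - auto.
  - change (glbf (fun m => eval f (upd L M v n m)) = glbf (fun m => eval f (upd L M w n m))).
    f_equal. extensionality m. apply IHf. intros z Hz. unfold upd.
    destruct (Nat.eqb z n) eqn:E; auto. apply H. simpl. rewrite E. auto.
  - change (lubf (fun m => eval f (upd L M v n m)) = lubf (fun m => eval f (upd L M w n m))).
    f_equal. extensionality m. apply IHf. intros z Hz. unfold upd.
    destruct (Nat.eqb z n) eqn:E; auto. apply H. simpl. rewrite E. auto.
Qed.

Lemma eval_upd_notfree f x m v : free L x f = false -> eval f (upd L M v x m) = eval f v.
Proof.
  intros H. apply eval_ext. intros z Hz. unfold upd. destruct (Nat.eqb z x) eqn:E; auto.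
  apply Nat.eqb_eq in E; subst. congruence.
Qed.

Lemma subst_notfree x t f : free L x f = false -> subst L x t f = f.
Proof.
  induction f; simpl; intros H.
  - f_equal. induction t0; simpl in *; auto.
    apply Bool.orb_false_iff in H as [H1 H2]. f_equal; auto.
    destruct h; simpl in *; auto. rewrite H1; auto.
  - apply Bool.orb_false_iff in H as [H1 H2]. f_equal; auto.
  - apply Bool.orb_false_iff in H as [H1 H2]. f_equal; auto.
  - auto.
  - destruct (Nat.eqb x n); auto. f_equal; auto.
  - destruct (Nat.eqb x n); auto. f_equal; auto.
Qed.

Lemma subst_eval x t f : substitutable L t x f -> forall v,
  eval (subst L x t f) v = eval f (upd L M v x (teval L M v t)).
Proof.
  induction f; simpl; intros Hs v.
  - f_equal. clear Hs. induction t0; simpl; auto. f_equal; auto.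
    destruct h; simpl; unfold upd; auto. rewrite Nat.eqb_sym. destruct Nat.eqb; auto.
  - destruct Hs. rewrite IHf1, IHf2; auto.
  - destruct Hs. rewrite IHf1, IHf2; auto.
  - auto.
  - destruct (Nat.eqb x n) eqn:E.
    + symmetry. change (eval (All L n f) (upd L M v x (teval L M v t)) = eval (All L n f) v).
      apply eval_upd_notfree. simpl. rewrite E; auto.
    + destruct Hs as [Hs|[Hy Hs]].
      * simpl in Hs. try rewrite E in Hs. rewrite (subst_notfree x t f Hs).
        symmetry. change (eval (All L n f) (upd L M v x (teval L M v t)) = eval (All L n f) v).
        apply eval_upd_notfree. simpl. rewrite E; auto.
      * change (glbf (fun m => eval (subst L x t f) (upd L M v n m)) = glbf (fun m => eval f (upd L M (upd L M v x (teval L M v t)) n m))).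
        f_equal. extensionality m. rewrite IHf by auto.
        apply eval_ext. intros z _. unfold upd.
        destruct t; simpl in *; [rewrite (Nat.eqb_sym n n0) in Hy|];
        destruct (Nat.eqb z x) eqn:E1; destruct (Nat.eqb z n) eqn:E2; auto;
        try (apply Nat.eqb_eq in E1; apply Nat.eqb_eq in E2; subst; rewrite Nat.eqb_refl in E; discriminate);
        try rewrite Hy; auto.
  - destruct (Nat.eqb x n) eqn:E.
    + symmetry. change (eval (Ex L n f) (upd L M v x (teval L M v t)) = eval (Ex L n f) v).
      apply eval_upd_notfree. simpl. rewrite E; auto.
    + destruct Hs as [Hs|[Hy Hs]].
      * simpl in Hs. try rewrite E in Hs. rewrite (subst_notfree x t f Hs).
        symmetry. change (eval (Ex L n f) (upd L M v x (teval L M v t)) = eval (Ex L n f) v).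
        apply eval_upd_notfree. simpl. rewrite E; auto.
      * change (lubf (fun m => eval (subst L x t f) (upd L M v n m)) = lubf (fun m => eval f (upd L M (upd L M v x (teval L M v t)) n m))).
        f_equal. extensionality m. rewrite IHf by auto.
        apply eval_ext. intros z _. unfold upd.
        destruct t; simpl in *; [rewrite (Nat.eqb_sym n n0) in Hy|];
        destruct (Nat.eqb z x) eqn:E1; destruct (Nat.eqb z n) eqn:E2; auto;
        try (apply Nat.eqb_eq in E1; apply Nat.eqb_eq in E2; subst; rewrite Nat.eqb_refl in E; discriminate);
        try rewrite Hy; auto.
Qed.
End Sem.

Hint Resolve i0 i1 tn_in01 res_in01 eval_in01 : i01.
Ltac I := eauto with i01.

Lemma inf_alg (B : ctnorm) F A b (P : nat -> R) :
  in01 F -> in01 A -> in01 b -> P 0%nat = b -> (forall n, P (S n) = tn B b (P n)) ->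
  (forall n, Rmax F (res B A (P n)) = 1) -> Rmax F (res B A (tn B A b)) = 1.
Proof.
  intros HF HA Hb HP0 HPS H.
  assert (HPi : forall n, in01 (P n)). { induction n; [rewrite HP0|rewrite HPS]; I. }
  assert (HPadd : forall n m, P (S (n + m)) = tn B (P n) (P m)).
  { induction n; intros m; simpl. rewrite HPS, HP0; auto.
    rewrite HPS, IHn, HPS. apply tn_assoc; auto. }
  destruct (Req_dec F 1) as [->|HF1].
  { unfold Rmax; destruct Rle_dec; auto. pose proof (rle1 B A (tn B A b) HA ltac:(I)). lra. }
  assert (HAP : forall n, A <= P n).
  { intro n. specialize (H n). apply (req1 B); auto. revert H. unfold Rmax. destruct Rle_dec; intros; auto.
    exfalso; auto. }
  destruct (glb_char P (inhabits 0%nat) HPi) as [Hb0 [Hlb Hglb]].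
  set (b0 := glbf P) in *.
  assert (Hidem : b0 <= tn B b0 b0).
  { apply Rnot_lt_le. intro Hlt.
    destruct (tn_cont B b0 b0 Hb0 Hb0 (b0 - tn B b0 b0) ltac:(lra)) as [d [Hd Hd']].
    assert (exists n, P n < b0 + d).
    { apply not_all_not_ex. intro Hn. assert (b0 + d <= b0). apply Hglb. intro m.
      apply Rnot_lt_le. apply Hn. lra. }
    destruct H0 as [n Hn].
    assert (Hn2 := Hlb n).
    specialize (Hd' (P n) (P n) (HPi n) (HPi n)).
    assert (Rabs (b0 - P n) < d) by (rewrite Rabs_left1; lra).
    specialize (Hd' H0 H0).
    rewrite <- HPadd in Hd'. specialize (Hlb (S (n + n))).
    rewrite Rabs_minus_sym in Hd'. rewrite Rabs_right in Hd' by lra. lra. }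
  assert (HAb0 : A <= b0) by (apply Hglb; auto).
  assert (Hb0b : b0 <= b) by (rewrite <- HP0; apply Hlb).
  destruct (divis B A b0 HA Hb0 HAb0) as [z [Hz Hz']].
  assert (HAt : A <= tn B A b).
  { apply Rle_trans with (tn B A b0); [| apply tn_mono_r; auto].
    rewrite <- Hz' at 2. rewrite (tcomm B (tn B b0 z) b0); [|apply tn_in01; auto|auto].
    rewrite (tn_assoc B b0 b0 z) by auto. rewrite <- Hz' at 1. apply tn_mono; I. }
  rewrite (r1 B A (tn B A b)); [|auto|apply tn_in01; auto|exact HAt]. unfold Rmax, in01 in *; destruct Rle_dec; lra.
Qed.

Hint Resolve i0 i1 tn_in01 res_in01 eval_in01 : i01.
Ltac II := eauto with i01.

Section Ax.
Variables (L : language) (B : ctnorm) (M : structure L).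
Local Notation eval := (eval L B M).
Local Notation t := (tn B).
Local Notation r := (res B).
Lemma eval_Imp f g v : eval (Imp L f g) v = r (eval f v) (eval g v). Proof. reflexivity. Qed.
Lemma eval_Conj f g v : eval (Conj L f g) v = t (eval f v) (eval g v). Proof. reflexivity. Qed.
Lemma eval_Vee f g v : eval (Vee L f g) v = Rmax (eval f v) (eval g v).
Proof. unfold Vee, Wedge. simpl. apply vee; II. Qed.
Let Hd := dom_nonempty L M.

Lemma ax_sound f : BLaxiom L f -> forall v, eval f v = 1.
Proof.
  intros Hax v; destruct Hax; repeat (rewrite eval_Imp || rewrite eval_Conj).
  - pose proof (eval_in01 L B M f v) as a01; pose proof (eval_in01 L B M g v) as b01; pose proof (eval_in01 L B M h v) as c01.
    set (a := eval f v) in *; set (b := eval g v) in *; set (c := eval h v) in *.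
    apply r1; II. apply res_iff; II. apply res_iff; II.
    rewrite (tcomm B _ a) by II. rewrite (tn_assoc B) by II.
    apply Rle_trans with (t b (r b c)). apply tn_mono; II. apply mp; II. apply mp; II.
  - apply r1; II. apply tlel; II.
  - apply r1; II. rewrite tcomm by II. lra.
  - apply r1; II. rewrite !tmin by II. rewrite Rmin_comm. lra.
  - pose proof (eval_in01 L B M f v) as a01; pose proof (eval_in01 L B M g v) as b01; pose proof (eval_in01 L B M h v) as c01.
    set (a := eval f v) in *; set (b := eval g v) in *; set (c := eval h v) in *.
    apply r1; II. apply res_iff; II. rewrite (tn_assoc B) by II.
    apply Rle_trans with (t (r b c) b). apply tn_mono; II. rewrite tcomm by II. apply mp; II.
    rewrite tcomm by II. apply mp; II.
  - pose proof (eval_in01 L B M f v) as a01; pose proof (eval_in01 L B M g v) as b01; pose proof (eval_in01 L B M h v) as c01.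
    set (a := eval f v) in *; set (b := eval g v) in *; set (c := eval h v) in *.
    apply r1; II. apply res_iff; II. apply res_iff; II. rewrite <- (tn_assoc B) by II.
    rewrite tcomm by II. apply mp; II.
  - pose proof (eval_in01 L B M f v) as a01; pose proof (eval_in01 L B M g v) as b01; pose proof (eval_in01 L B M h v) as c01.
    set (a := eval f v) in *; set (b := eval g v) in *; set (c := eval h v) in *.
    destruct (Rle_dec a b).
    + rewrite (r1 B a b) by auto. rewrite r1l by auto. apply r1; II. apply rge; II.
    + rewrite (r1 B b a) by (auto; lra). rewrite r1l by auto. rewrite (r1 B c c) by (auto; lra).
      apply r1; II. apply rle1; II.
  - apply r1; II. destruct (eval_in01 L B M f v); simpl; lra.
  - rewrite eval_All. rewrite subst_eval by auto.
    destruct (glb_char (fun m => eval f (upd L M v x m)) Hd) as [_ [H1 _]]. intro; II.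
    apply r1; II. apply (glb_char _ Hd); intro; II.
  - rewrite eval_Ex. rewrite subst_eval by auto.
    destruct (lub_char (fun m => eval f (upd L M v x m)) Hd) as [_ [H1 _]]. intro; II.
    apply r1; II. apply (lub_char _ Hd); intro; II.
  - rewrite !eval_All.
    destruct (glb_char (fun m => eval (Imp L f g) (upd L M v x m)) Hd) as [G01 [G1 G2]]. intro; II.
    destruct (glb_char (fun m => eval g (upd L M v x m)) Hd) as [g01 [g1 g2]]. intro; II.
    apply r1; II. apply res_iff; II. apply g2. intro m. apply res_iff; II.
    rewrite <- (eval_upd_notfree L B M f x m v) by auto. rewrite <- eval_Imp. apply G1.
  - rewrite eval_All, eval_Ex.
    destruct (glb_char (fun m => eval (Imp L g f) (upd L M v x m)) Hd) as [G01 [G1 G2]]. intro; II.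
    destruct (lub_char (fun m => eval g (upd L M v x m)) Hd) as [g01 [g1 g2]]. intro; II.
    apply r1; II. apply res_iff; II. rewrite tcomm by II. apply res_iff; II.
    apply g2. intro m. apply res_iff; II. rewrite tcomm by II. apply res_iff; II.
    rewrite <- (eval_upd_notfree L B M f x m v) by auto. rewrite <- eval_Imp. apply G1.
  - rewrite eval_Vee, !eval_All.
    destruct (glb_char (fun m => eval (Vee L g f) (upd L M v x m)) Hd) as [G01 [G1 G2]]. intro; II.
    destruct (glb_char (fun m => eval g (upd L M v x m)) Hd) as [g01 [g1 g2]]. intro; II.
    set (HH := glbf (fun m => eval (Vee L g f) (upd L M v x m))) in *.
    set (G := glbf (fun m => eval g (upd L M v x m))) in *.
    assert (a01 := eval_in01 L B M f v).
    assert (Rm01 : in01 (Rmax G (eval f v))).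
    { unfold Rmax; destruct Rle_dec; auto. }
    apply r1; auto.
    apply Rnot_lt_le; intro Hlt. pose proof (Rmax_l G (eval f v)). pose proof (Rmax_r G (eval f v)).
    assert (HH <= G). { apply g2. intro m. specialize (G1 m). cbv beta in G1.
      rewrite eval_Vee, (eval_upd_notfree L B M f x m v) in G1 by auto.
      revert G1. unfold Rmax at 1. destruct Rle_dec; intros; lra. }
    lra.
Qed.

Lemma rc_sound f : RCaxiom L f -> forall v, eval f v = 1.
Proof.
  intros Hax v; destruct Hax. rewrite eval_Imp, eval_Conj, !eval_All.
  destruct (glb_char (fun m => eval (Conj L c c) (upd L M v x m)) Hd) as [G01 [G1 G2]]. intro; II.
  destruct (glb_char (fun m => eval c (upd L M v x m)) Hd) as [g01 [g1 g2]]. intro; II.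
  set (HH := glbf (fun m => eval (Conj L c c) (upd L M v x m))) in *.
  set (G := glbf (fun m => eval c (upd L M v x m))) in *.
  apply r1; II. apply Rnot_lt_le; intro Hlt.
  destruct (tn_cont B G G g01 g01 (HH - t G G) ltac:(lra)) as [d [Hd0 Hd']].
  assert (Hex : exists m, eval c (upd L M v x m) < G + d).
  { apply not_all_not_ex. intro Hn. assert (Hc : G + d <= G). apply g2. intro m.
    apply Rnot_lt_le. apply Hn. lra. }
  destruct Hex as [m Hm]. specialize (g1 m). specialize (G1 m).
  assert (Hab : Rabs (G - eval c (upd L M v x m)) < d) by (rewrite Rabs_left1; lra).
  specialize (Hd' (eval c (upd L M v x m)) (eval c (upd L M v x m)) ltac:(II) ltac:(II) Hab Hab). cbv beta in G1. rewrite eval_Conj in G1.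
  rewrite Rabs_minus_sym in Hd'. unfold Rabs in Hd'. destruct Rcase_abs; lra.
Qed.
End Ax.

Theorem mainTheorem7 (L : language) (Gamma : form L -> Prop) (phi : form L) :
  provable L Gamma phi -> entails L Gamma phi.
Proof.
  intros [p _] B M HG.
  assert (Hall : forall i, is_model L B M (pform L Gamma phi p i)).
  { intro i. induction i as [i IH] using (well_founded_ind (plt_wf L Gamma phi p)).
    destruct (pjust L Gamma phi p i) as [Ha|[Ha|[Ha|[Ha|[Ha|Ha]]]]].
    - intro v; apply ax_sound; auto.
    - intro v; apply rc_sound; auto.
    - apply HG; auto.
    - destruct Ha as [j [k [Hj [Hk Hjk]]]]. intro v.
      pose proof (IH k Hk v) as E. rewrite Hjk, eval_Imp, (IH j Hj v), r1l in E; II.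
    - destruct Ha as [j [x [Hj Hji]]]. intro v. rewrite Hji, eval_All.
      destruct (glb_char (fun m => eval L B M (pform L Gamma phi p j) (upd L M v x m)) (dom_nonempty L M)) as [G01 [G1 G2]]. intro; II.
      apply Rle_antisym. apply G01. apply G2. intro m. rewrite (IH j Hj). lra.
    - destruct Ha as [f [a [b [_ [_ [_ [Hi Hn]]]]]]]. intro v. rewrite Hi, eval_Vee, eval_Imp, eval_Conj.
      apply (inf_alg B _ _ _ (fun n => eval L B M (bpow L b n) v)); II.
      intro n. destruct (Hn n) as [j [Hj Hjn]]. rewrite <- eval_Imp, <- eval_Vee, <- Hjn. apply IH; auto. }
  rewrite <- (pform_last L Gamma phi p). apply Hall.
Qed.
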